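(* Let $F$ be the elementary cellular automaton with rule number 78. For every nonempty finite word $u\in\{0,1\}^*$, the deterministic communication complexity of $\textsc{SInv}_{F,u}$ restricted to inputs of length $n$ is bounded by a constant independent of $n$.
   Context: An elementary cellular automaton (ECA) with rule number $N\in\{0,\dots,255\}$ is the map $F:\{0,1\}^{\mathbb Z}\to\{0,1\}^{\mathbb Z}$ given by $F(x)_i=f(x_{i-1},x_i,x_{i+1})$. Here the local rule $f:\{0,1\}^3\to\{0,1\}$ is determined by $N=\sum_{a,b,c\in\{0,1\}}2^{4a+2b+c}f(a,b,c)$. For a nonempty finite word $u$, $p_u\in\{0,1\}^{\mathbb Z}$ is defined by $(p_u)_i=u_{i\bmod |u|}$. For a finite word $x$, $p_u[x]$ is the configuration equal to $x$ on positions $0,\dots,|x|-1$ and to $p_u$ elsewhere. $\textsc{SInv}_{F,u}$ is the decision problem: on input a finite word $x$, decide whether there is an integer $w$ such that for all $t\ge0$ the set of positions where $F^t(p_u)$ and $F^t(p_u[x])$ differ is contained in an interval of length $w$. For each $n$, it is regarded as a function $\{0,1\}^n\to\{0,1\}$. For a function $g:X\times Y\to Z$, $D(g)$ is the minimal depth of a deterministic two-party protocol computing $g$. In such a protocol, Alice knows $x$ and Bob knows $y$. The protocol is a binary tree: each internal node is labelled by a function of Alice's input only or of Bob's input only, with values in $\{\text{left},\text{right}\}$, and each leaf is labelled by an output value. For $g:\{0,1\}^m\to Z$, set $D(g)=\max_{0\le i<m}D(g_i)$, where $g_i:\{0,1\}^i\times\{0,1\}^{m-i}\to Z$ is $g_i(x,y)=g(xy)$.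 *)

(* Defs.v *)
From Stdlib Require Import ZArith List Arith Bool.
Import ListNotations.
Open Scope Z_scope.

Definition config := Z -> bool.
Definition word := list bool.

Definition local_rule (N : Z) (a b c : bool) : bool :=
  Z.testbit N (4 * Z.b2z a + 2 * Z.b2z b + Z.b2z c).

Definition eca (N : Z) (x : config) : config :=
  fun i => local_rule N (x (i - 1)) (x i) (x (i + 1)).

Definition periodic (u : word) : config :=
  fun i => nth (Z.to_nat (i mod Z.of_nat (length u))) u false.

Definition patch (u x : word) : config :=
  fun i => if andb (0 <=? i) (i <? Z.of_nat (length x))
           then nth (Z.to_nat i) x false else periodic u i.

Definition SInv (N : Z) (u x : word) : Prop :=
  exists w : Z, forall t : nat, exists a : Z, forall i : Z,
    Nat.iter t (eca N) (periodic u) i <> Nat.iter t (eca N) (patch u x) i ->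
    a <= i <= a + w.

(* Deterministic two-party protocols: binary trees whose internal nodes are
   labelled by a function of Alice's input or of Bob's input. *)
Inductive protocol (X Y O : Type) : Type :=
| Leaf : O -> protocol X Y O
| NodeA : (X -> bool) -> protocol X Y O -> protocol X Y O -> protocol X Y O
| NodeB : (Y -> bool) -> protocol X Y O -> protocol X Y O -> protocol X Y O.
Arguments Leaf {X Y O}.
Arguments NodeA {X Y O}.
Arguments NodeB {X Y O}.

Fixpoint run {X Y O} (p : protocol X Y O) (x : X) (y : Y) : O :=
  match p with
  | Leaf o => o
  | NodeA f l r => if f x then run l x y else run r x y
  | NodeB g l r => if g y then run l x y else run r x y
  end.

Fixpoint depth {X Y O} (p : protocol X Y O) : nat :=
  match p with
  | Leaf _ => 0
  | NodeA _ l r | NodeB _ l r => S (Nat.max (depth l) (depth r))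
  end.

(* D(g_i) <= c for the length-n restriction of the decision problem P,
   split after position i: some protocol of depth <= c, Alice holding the
   first i letters and Bob the remaining n - i, outputs true exactly on
   the words in P. *)
Definition split_cc_le (P : word -> Prop) (n i c : nat) : Prop :=
  exists p : protocol word word bool, (depth p <= c)%nat /\
    forall x y : word, length x = i -> length y = (n - i)%nat ->
      (run p x y = true <-> P (x ++ y)).

Definition cc_le (P : word -> Prop) (n c : nat) : Prop :=
  forall i : nat, (i < n)%nat -> split_cc_le P n i c.

(* Main.v *)
Require Import Defs.
From Stdlib Require Import ZArith List Arith Lia Bool.
Import ListNotations.
Open Scope Z_scope.

Notation F := (eca 78).

Lemma f78 a b c : local_rule 78 a b c = if a then b && negb c else b || c.
Proof. destruct a, b, c; reflexivity. Qed.

Lemma F_eq y i : F y i = if y (i-1) then y i && negb (y (i+1)) else y i || y (i+1).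
Proof. unfold eca. apply f78. Qed.

Lemma wall_step y l : y l = true -> y (l+1) = false -> F y l = true /\ F y (l+1) = false.
Proof.
  intros H1 H2. rewrite !F_eq. replace (l+1-1) with l by lia. rewrite H1, H2.
  destruct (y (l-1)); simpl; auto.
Qed.

Lemma wall_iter y l : y l = true -> y (l+1) = false ->
  forall t, Nat.iter t F y l = true /\ Nat.iter t F y (l+1) = false.
Proof.
  intros H1 H2 t; induction t as [|t IH]; simpl; auto.
  destruct IH; apply wall_step; auto.
Qed.

Lemma iter_ext y z : (forall i, y i = z i) -> forall t i, Nat.iter t F y i = Nat.iter t F z i.
Proof.
  intros H t; induction t as [|t IH]; intros i; simpl; auto.
  unfold eca. rewrite !IH. reflexivity.
Qed.

Lemma zero_iter y : (forall i, y i = false) -> forall t i, Nat.iter t F y i = false.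
Proof.
  intros H t; induction t as [|t IH]; intros i; simpl; auto.
  rewrite F_eq, !IH. reflexivity.
Qed.

Lemma spread y s : (forall i, i < s -> y i = false) -> y s = true ->
  (forall i, i < s - 1 -> F y i = false) /\ F y (s-1) = true.
Proof.
  intros H1 H2. split.
  - intros i Hi. rewrite F_eq, !H1 by lia. reflexivity.
  - rewrite F_eq. replace (s-1+1) with s by lia. rewrite !H1 by lia. rewrite H2. reflexivity.
Qed.

Lemma spread_iter y s : (forall i, i < s -> y i = false) -> y s = true ->
  forall t, (forall i, i < s - Z.of_nat t -> Nat.iter t F y i = false)
            /\ Nat.iter t F y (s - Z.of_nat t) = true.
Proof.
  intros H1 H2 t; induction t as [|t IH].
  - simpl. replace (s - 0) with s by lia. auto.
  - destruct IH as [A B]. destruct (spread _ _ A B) as [C D].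
    replace (s - Z.of_nat (S t)) with (s - Z.of_nat t - 1) by lia.
    change (Nat.iter (S t) F y) with (F (Nat.iter t F y)). auto.
Qed.

Lemma search y : forall n j, y j = true -> y (j + Z.of_nat n) = false ->
  exists m, j <= m < j + Z.of_nat n /\ y m = true /\ y (m+1) = false.
Proof.
  induction n as [|n IH]; intros j H1 H2.
  - replace (j + Z.of_nat 0) with j in H2 by lia. congruence.
  - destruct (y (j+1)) eqn:E.
    + destruct (IH (j+1) E) as [m [Hm1 Hm2]].
      * replace (j + 1 + Z.of_nat n) with (j + Z.of_nat (S n)) by lia. auto.
      * exists m. split; [lia|auto].
    + exists j. split; [lia|auto].
Qed.

Lemma search' y j k : j < k -> y j = true -> y k = false ->
  exists m, j <= m < k /\ y m = true /\ y (m+1) = false.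
Proof.
  intros Hjk H1 H2. destruct (search y (Z.to_nat (k - j)) j H1) as [m Hm].
  - replace (j + Z.of_nat (Z.to_nat (k-j))) with k by lia. auto.
  - exists m. destruct Hm as [? [? ?]]. split; [lia|auto].
Qed.

Lemma leftmost y b0 m : (forall i, i < b0 -> y i = false) -> y m = true ->
  exists s, y s = true /\ forall i, i < s -> y i = false.
Proof.
  intros H0 Hm.
  assert (G : forall n, (exists s, y s = true /\ forall i, i < s -> y i = false)
     \/ (forall i, i < b0 + Z.of_nat n -> y i = false)).
  { induction n as [|n IH].
    - right. intros i Hi. apply H0. lia.
    - destruct IH as [IH|IH]; [left; auto|].
      destruct (y (b0 + Z.of_nat n)) eqn:E.
      + left. exists (b0 + Z.of_nat n). auto.
      + right. intros i Hi. destruct (Z.eq_dec i (b0 + Z.of_nat n)); [subst; auto|].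
        apply IH. lia. }
  assert (b0 <= m). { destruct (Z_lt_le_dec m b0); auto. rewrite H0 in Hm; auto. discriminate. }
  destruct (G (S (Z.to_nat (m - b0)))) as [?|G']; auto.
  rewrite G' in Hm by lia. discriminate.
Qed.

Lemma core y s m : (forall i, i < s -> y i = false) -> y s = true ->
  y m = true -> y (m+1) = false -> forall w, exists t,
  Nat.iter t F y (s - Z.of_nat t) = true /\ Nat.iter t F y m = true /\
  m - (s - Z.of_nat t) > w.
Proof.
  intros H0 Hs Hm Hm1 w.
  assert (s <= m). { destruct (Z_lt_le_dec m s); auto. rewrite H0 in Hm; auto. discriminate. }
  exists (S (Z.to_nat (Z.abs w))). split; [|split].
  - apply (spread_iter y s H0 Hs).
  - apply (wall_iter y m Hm Hm1).
  - lia.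
Qed.

Lemma periodic_shift u i z : periodic u (i + Z.of_nat (length u) * z) = periodic u i.
Proof.
  unfold periodic. rewrite (Z.mul_comm _ z), Z_mod_plus_full. reflexivity.
Qed.

Lemma periodic_small u j : (j < length u)%nat -> periodic u (Z.of_nat j) = nth j u false.
Proof.
  intros H. unfold periodic. rewrite Z.mod_small by lia. rewrite Nat2Z.id. reflexivity.
Qed.

Lemma periodic_const u b : u <> nil -> (forall v, In v u -> v = b) ->
  forall i, periodic u i = b.
Proof.
  intros Hu Hb i. unfold periodic. apply Hb. apply nth_In.
  destruct u; [congruence|]. simpl length.
  pose proof (Z.mod_pos_bound i (Z.of_nat (S (length u)))). lia.
Qed.

Lemma patch_out u x i : i < 0 \/ Z.of_nat (length x) <= i -> patch u x i = periodic u i.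
Proof.
  intros H. unfold patch.
  destruct (0 <=? i) eqn:E1; destruct (i <? Z.of_nat (length x)) eqn:E2; simpl; auto.
  apply Z.leb_le in E1; apply Z.ltb_lt in E2. lia.
Qed.

Lemma patch_in u x j : (j < length x)%nat -> patch u x (Z.of_nat j) = nth j x false.
Proof.
  intros H. unfold patch.
  replace (0 <=? Z.of_nat j) with true by (symmetry; apply Z.leb_le; lia).
  replace (Z.of_nat j <? Z.of_nat (length x)) with true by (symmetry; apply Z.ltb_lt; lia).
  simpl. rewrite Nat2Z.id. reflexivity.
Qed.

Lemma ex_bad (x : list bool) b : forallb (Bool.eqb b) x = false ->
  exists j, (j < length x)%nat /\ nth j x false = negb b.
Proof.
  induction x as [|a x IH]; simpl; [discriminate|].
  intros H. destruct (Bool.eqb b a) eqn:E; simpl in H.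
  - destruct (IH H) as [j [? ?]]. exists (S j). simpl. split; auto; lia.
  - exists 0%nat. split; [lia|]. destruct a, b; simpl in *; congruence.
Qed.

Lemma all_b (x : list bool) b : forallb (Bool.eqb b) x = true -> forall v, In v x -> v = b.
Proof.
  intros H v Hv. rewrite forallb_forall in H. specialize (H v Hv).
  destruct v, b; simpl in *; congruence.
Qed.

Lemma sinv_const u b x : u <> nil -> (forall v, In v u -> v = b) ->
  (SInv 78 u x <-> forallb (Bool.eqb b) x = true).
Proof.
  intros Hu Hb. pose proof (periodic_const u b Hu Hb) as Hp. split.
  - intros [w Hw]. destruct (forallb (Bool.eqb b) x) eqn:E; auto. exfalso.
    destruct (ex_bad x b E) as [j [Hj Hjv]].
    assert (K : exists (t0 : nat) y s m,
       (forall t, Nat.iter (t + t0) F (patch u x) = Nat.iter t F y) /\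
       (forall t i, Nat.iter (t + t0) F (periodic u) i = false) /\
       (forall i, i < s -> y i = false) /\ y s = true /\ y m = true /\ y (m+1) = false).
    { destruct b.
      -
        assert (Hq0 : patch u x (-1) = true) by (rewrite patch_out by lia; auto).
        assert (Hqj : patch u x (Z.of_nat j) = false) by (rewrite patch_in by auto; auto).
        destruct (search' (patch u x) (-1) (Z.of_nat j)) as [m [Hm1 [Hm2 Hm3]]]; auto; try lia.
        set (y := F (patch u x)).
        destruct (wall_step _ _ Hm2 Hm3) as [Wm Wm1].
        assert (Hy0 : forall i, i < -1 -> y i = false).
        { intros i Hi. unfold y. rewrite F_eq, !patch_out by lia. rewrite !Hp. reflexivity. }
        destruct (leftmost y (-1) m Hy0 Wm) as [s [Hs1 Hs2]].
        exists 1%nat, y, s, m. split; [|split]; auto.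
        + intros t. rewrite Nat.add_1_r. apply Nat.iter_succ_r.
        + intros t i. rewrite Nat.add_1_r, Nat.iter_succ_r. apply zero_iter.
          intros k. rewrite F_eq, !Hp. reflexivity.
      - assert (Hqj : patch u x (Z.of_nat j) = true) by (rewrite patch_in by auto; auto).
        assert (HqL : patch u x (Z.of_nat (length x)) = false) by (rewrite patch_out by lia; auto).
        destruct (search' (patch u x) (Z.of_nat j) (Z.of_nat (length x))) as [m [Hm1 [Hm2 Hm3]]];
          auto; try lia.
        assert (Hy0 : forall i, i < 0 -> patch u x i = false).
        { intros i Hi. rewrite patch_out by lia. auto. }
        destruct (leftmost _ 0 m Hy0 Hm2) as [s [Hs1 Hs2]].
        exists 0%nat, (patch u x), s, m. split; [|split]; auto.
        + intros t. rewrite Nat.add_0_r. reflexivity.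
        + intros t i. rewrite Nat.add_0_r. apply zero_iter. auto. }
    destruct K as [t0 [y [s [m [K1 [K2 [K3 [K4 [K5 K6]]]]]]]]].
    destruct (core y s m K3 K4 K5 K6 w) as [t [T1 [T2 T3]]].
    destruct (Hw (t + t0)%nat) as [a Ha].
    assert (A1 := Ha (s - Z.of_nat t)). assert (A2 := Ha m).
    rewrite K1, K2 in A1, A2. rewrite T1 in A1. rewrite T2 in A2.
    assert (a <= s - Z.of_nat t <= a + w) by (apply A1; discriminate).
    assert (a <= m <= a + w) by (apply A2; discriminate).
    lia.
  - intros H. exists 0. intros t. exists 0. intros i Hi. exfalso. apply Hi.
    apply iter_ext. intros k.
    destruct (Z_lt_le_dec k 0); [rewrite patch_out by lia; auto|].
    destruct (Z_lt_le_dec k (Z.of_nat (length x))); [|rewrite patch_out by lia; auto].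
    replace k with (Z.of_nat (Z.to_nat k)) by lia. rewrite patch_in by lia.
    rewrite Hp. symmetry. apply (all_b x b H). apply nth_In. lia.
Qed.

Lemma confine y z l r : l < r ->
  y l = true -> y (l+1) = false -> z l = true -> z (l+1) = false ->
  y r = true -> y (r+1) = false -> z r = true -> z (r+1) = false ->
  (forall i, i <= l + 1 \/ r <= i -> y i = z i) ->
  forall t i, i <= l + 1 \/ r <= i -> Nat.iter t F y i = Nat.iter t F z i.
Proof.
  intros Hlr Y1 Y2 Z1 Z2 Y3 Y4 Z3 Z4 H t.
  induction t as [|t IH]; intros i Hi; [simpl; auto|].
  pose proof (wall_iter y l Y1 Y2 (S t)) as [A1 A2].
  pose proof (wall_iter z l Z1 Z2 (S t)) as [B1 B2].
  pose proof (wall_iter y r Y3 Y4 (S t)) as [A3 A4].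
  pose proof (wall_iter z r Z3 Z4 (S t)) as [B3 B4].
  destruct (Z.eq_dec i (l+1)); [subst; congruence|].
  destruct (Z.eq_dec i r); [subst; congruence|].
  change (Nat.iter (S t) F y) with (F (Nat.iter t F y)).
  change (Nat.iter (S t) F z) with (F (Nat.iter t F z)).
  unfold eca. rewrite !IH by lia. reflexivity.
Qed.

Lemma sinv_nonconst u x : u <> nil -> forallb (Bool.eqb (hd false u)) u = false -> SInv 78 u x.
Proof.
  intros Hu E. destruct (ex_bad u _ E) as [j [Hj Hjv]].
  set (n := Z.of_nat (length u)).
  assert (Hn : 1 <= n) by (destruct u; [congruence|]; unfold n; simpl length; lia).
  assert (P0 : periodic u 0 = hd false u).
  { destruct u; [congruence|]. apply (periodic_small (b :: u) 0); simpl; lia. }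
  assert (Pj : periodic u (Z.of_nat j) = negb (hd false u)) by (rewrite periodic_small; auto).
  assert (Pj' : periodic u (Z.of_nat j + n * 1) = negb (hd false u)) by (unfold n; rewrite periodic_shift; auto).
  assert (W : exists m, 0 <= m < 2 * n /\ periodic u m = true /\ periodic u (m+1) = false).
  { destruct (hd false u) eqn:Eh.
    - destruct (search' (periodic u) 0 (Z.of_nat j + n * 1)) as [m [Hm1 [Hm2 Hm3]]]; auto; try lia.
      exists m. split; [lia|auto].
    - destruct (search' (periodic u) (Z.of_nat j) (0 + n * 1)) as [m [Hm1 [Hm2 Hm3]]]; auto; try lia.
      + unfold n. rewrite periodic_shift. auto.
      + exists m. split; [lia|auto]. }
  destruct W as [m [Wm1 [Wm2 Wm3]]].
  set (L := Z.of_nat (length x)).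
  set (l := m + n * (-3)). set (r := m + n * (L + 1)).
  assert (Pl : periodic u l = true /\ periodic u (l+1) = false).
  { unfold l, n. rewrite periodic_shift.
    replace (m + Z.of_nat (length u) * -3 + 1) with (m + 1 + Z.of_nat (length u) * -3) by lia.
    rewrite periodic_shift. auto. }
  assert (Pr : periodic u r = true /\ periodic u (r+1) = false).
  { unfold r, n. rewrite periodic_shift.
    replace (m + Z.of_nat (length u) * (L + 1) + 1) with (m + 1 + Z.of_nat (length u) * (L+1)) by lia.
    rewrite periodic_shift. auto. }
  destruct Pl as [Pl1 Pl2]. destruct Pr as [Pr1 Pr2].
  assert (HL : 0 <= L) by (unfold L; lia).
  assert (Hl : l + 1 < 0) by (unfold l; lia).
  assert (Hr : L <= r) by (unfold r; nia).
  exists (r - l). intros t. exists l. intros i Hi.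
  destruct (Z_le_gt_dec i (l+1)).
  - exfalso. apply Hi. symmetry.
    apply (confine (patch u x) (periodic u) l r); try lia; try (rewrite patch_out by lia; auto); auto.
    intros k Hk. rewrite patch_out by lia. auto.
  - destruct (Z_le_gt_dec r i).
    + exfalso. apply Hi. symmetry.
      apply (confine (patch u x) (periodic u) l r); try lia; try (rewrite patch_out by lia; auto); auto.
      intros k Hk. rewrite patch_out by lia. auto.
    + lia.
Qed.

Theorem mainTheorem7 :
  forall u : list bool, u <> nil ->
    exists c : nat, forall n : nat, cc_le (SInv 78%Z u) n c.
Proof.
  intros u Hu. exists 2%nat. intros n i Hi.
  destruct (forallb (Bool.eqb (hd false u)) u) eqn:E.
  - set (b := hd false u) in *.
    exists (NodeA (fun x => forallb (Bool.eqb b) x)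
              (NodeB (fun y => forallb (Bool.eqb b) y) (Leaf true) (Leaf false)) (Leaf false)).
    split; [simpl; lia|].
    intros x y _ _. rewrite (sinv_const u b (x ++ y) Hu (all_b u b E)).
    rewrite forallb_app. simpl.
    destruct (forallb (Bool.eqb b) x), (forallb (Bool.eqb b) y); simpl; split; auto.
  - exists (Leaf true). split; [simpl; lia|].
    intros x y _ _. simpl. split; auto. intros _. apply sinv_nonconst; auto.
Qed.
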